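(* Let $(x(t),y(t))$ be any solution of the system (FHN-CNN) and set $V_i=x_i-x_{i-1}$, $W_i=y_i-y_{i-1}$ for $1\le i\le n$ (with $x_0=x_n$, $y_0=y_n$). Then for all $t>0$, $$\frac{d}{dt}\sum_{i=1}^n\big(|V_i|^2+|W_i|^2\big)+2\delta\sum_{i=1}^n\big(|V_i|^2+|W_i|^2\big)+4p(x_n-x_1)^2\le 2\sum_{i=1}^n\Big[(\delta+\gamma)|V_i|^2+|c-b|\big(|V_i|^2+|W_i|^2\big)\Big]+2p(x_{n-1}-x_2)^2.$$
   Context: Fix an integer $n\ge 4$ and positive constants $a,b,c,\delta,p$. Let $f\in C^1(\mathbb{R},\mathbb{R})$ satisfy, for some positive constants $\lambda,\beta,\gamma$: $f(s)s\le -\lambda s^4+\beta$ and $f'(s)\le\gamma$ for all $s\in\mathbb{R}$. The FitzHugh–Nagumo cellular neural network with boundary feedback (FHN-CNN) is the ODE system for $t>0$, $1\le i\le n$: $$\frac{dx_i}{dt}=a(x_{i-1}-2x_i+x_{i+1})+f(x_i)-by_i+pu_i,\qquad \frac{dy_i}{dt}=cx_i-\delta y_i,$$ with the periodic convention $x_0=x_n$, $x_{n+1}=x_1$, and the boundary feedback $u_1=u_{n+1}=x_n-x_1$, $u_i=0$ for $2\le i\le n-1$, $u_n=u_0=x_1-x_n$. *)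

(* Defs.v *)
From Stdlib Require Import Reals Lra.
From Coquelicot Require Import Coquelicot.
Open Scope R_scope.

(* Cells are indexed by i = 1..n (x : nat -> R -> R, only indices 1..n matter).
   Periodic convention: index 0 means n, index n+1 means 1. *)
Definition pidx (n i : nat) : nat :=
  if Nat.eqb i 0 then n else if Nat.eqb i (S n) then 1%nat else i.

Definition per (n : nat) (z : nat -> R -> R) (i : nat) (t : R) : R :=
  z (pidx n i) t.

Definition ufb (n : nat) (x : nat -> R -> R) (i : nat) (t : R) : R :=
  if Nat.eqb i 1 then x n t - x 1%nat t
  else if Nat.eqb i n then x 1%nat t - x n t
  else 0.

Definition fhn_nonlinearity (f : R -> R) (lam beta gam : R) : Prop :=
  0 < lam /\ 0 < beta /\ 0 < gam /\
  (forall s, ex_derive f s) /\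
  (forall s, continuous (Derive f) s) /\
  (forall s, f s * s <= - lam * s ^ 4 + beta) /\
  (forall s, Derive f s <= gam).

Definition fhn_cnn_solution (n : nat) (a b c delta p : R) (f : R -> R)
    (x y : nat -> R -> R) : Prop :=
  forall i t, (1 <= i <= n)%nat -> 0 < t ->
    is_derive (x i) t
      (a * (per n x (i - 1) t - 2 * x i t + per n x (i + 1) t)
       + f (x i t) - b * y i t + p * ufb n x i t)
    /\ is_derive (y i) t (c * x i t - delta * y i t).

Definition Vd (n : nat) (x : nat -> R -> R) (i : nat) (t : R) : R :=
  x i t - per n x (i - 1) t.

Definition energy (n : nat) (x y : nat -> R -> R) (t : R) : R :=
  sum_n_m (fun i => Rabs (Vd n x i t) ^ 2 + Rabs (Vd n y i t) ^ 2) 1 n.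

(* Main.v *)
Require Import Defs.
From Stdlib Require Import Reals Lra Lia.
From Coquelicot Require Import Coquelicot.
Open Scope R_scope.

Lemma mvt_mono (f : R -> R) gam u v :
  (forall s, ex_derive f s) -> (forall s, Derive f s <= gam) ->
  (u - v) * (f u - f v) <= gam * (u - v) ^ 2.
Proof.
  intros Hd Hg.
  destruct (MVT_gen f v u (Derive f)) as [c [_ Hc]].
  - intros z _. apply Derive_correct, Hd.
  - intros z _. apply continuity_pt_filterlim. exact (ex_derive_continuous f z (Hd z)).
  - rewrite Hc. specialize (Hg c).
    assert (0 <= (u - v) ^ 2) by apply pow2_ge_0. assert (0 <= (gam - Derive f c) * (u - v) ^ 2) by (apply Rmult_le_pos; lra). nra.
Qed.

Lemma sumR_plus (u v : nat -> R) n m :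
  sum_n_m (fun k => u k + v k) n m = sum_n_m u n m + sum_n_m v n m.
Proof. apply (sum_n_m_plus u v). Qed.

Lemma sumR_scal (c : R) (u : nat -> R) n m :
  sum_n_m (fun k => c * u k) n m = c * sum_n_m u n m.
Proof. apply (sum_n_m_scal_l c u). Qed.

Lemma sumR_le_loc (u v : nat -> R) n m :
  (forall k, (n <= k <= m)%nat -> u k <= v k) -> sum_n_m u n m <= sum_n_m v n m.
Proof.
  intros H. set (w k := if (andb (Nat.leb n k) (Nat.leb k m)) then u k else v k).
  rewrite (sum_n_m_ext_loc u w).
  - apply sum_n_m_le. intros k; unfold w.
    destruct (Nat.leb n k) eqn:E1; destruct (Nat.leb k m) eqn:E2; simpl; try lra.
    apply H; apply Nat.leb_le in E1; apply Nat.leb_le in E2; lia.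
  - intros k Hk; unfold w. replace (Nat.leb n k) with true by (symmetry; apply Nat.leb_le; lia).
    replace (Nat.leb k m) with true by (symmetry; apply Nat.leb_le; lia). reflexivity.
Qed.

Lemma sumR_Sm (u : nat -> R) m : sum_n_m u 1 (S m) = sum_n_m u 1 m + u (S m).
Proof. apply (sum_n_Sm u 1 m). lia. Qed.

Lemma sumR_first (u : nat -> R) m : (1 <= m)%nat -> sum_n_m u 1 m = u 1%nat + sum_n_m u 2 m.
Proof. intros; apply (sum_Sn_m u 1 m); lia. Qed.

Lemma sum_derive (F : nat -> R -> R) (F' : nat -> R) t m :
  (forall i, (1 <= i <= m)%nat -> is_derive (F i) t (F' i)) ->
  is_derive (fun s => sum_n_m (fun i => F i s) 1 m) t (sum_n_m F' 1 m).
Proof.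
  induction m as [|m IH]; intros H.
  - rewrite sum_n_m_zero by lia.
    apply is_derive_ext with (fun _ => 0).
    + intros s. rewrite sum_n_m_zero by lia. reflexivity.
    + apply (@is_derive_const R_AbsRing R_NormedModule 0 t).
  - rewrite sumR_Sm.
    apply is_derive_ext with (fun s => sum_n_m (fun i => F i s) 1 m + F (S m) s).
    + intros s; rewrite sumR_Sm; reflexivity.
    + refine (is_derive_plus _ _ _ _ _ (IH _) (H (S m) _)); [intros; apply H|]; lia.
Qed.

Lemma sum_shift (n : nat) (g : nat -> R) : (1 <= n)%nat ->
  sum_n_m (fun i => g (pidx n (i - 1))) 1 n = sum_n_m g 1 n.
Proof.
  intros Hn. destruct n as [|k]; [lia|].
  rewrite sumR_first by lia. rewrite sumR_Sm.
  unfold pidx at 1; simpl.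
  destruct k as [|k'].
  - rewrite sum_n_m_zero by lia. rewrite sum_n_m_zero by lia. unfold zero; simpl; lra.
  - rewrite <- (sum_n_m_S (fun i => g (pidx (S (S k')) (i - 1))) 1 (S k')).
    rewrite (sum_n_m_ext_loc _ g).
    + lra.
    + intros j Hj. unfold pidx. simpl.
      replace (j - 0)%nat with j by lia.
      destruct (Nat.eqb j 0) eqn:E; [apply Nat.eqb_eq in E; lia|].
      destruct (Nat.eqb j (S (S (S k')))) eqn:E2; [apply Nat.eqb_eq in E2; lia|]. reflexivity.
Qed.

Lemma deriv_sq (g h : R -> R) t g' h' :
  is_derive g t g' -> is_derive h t h' ->
  is_derive (fun s => Rabs (g s - h s) ^ 2) t (2 * (g t - h t) * (g' - h')).
Proof.
  intros Hg Hh.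
  apply is_derive_ext with (fun s => (g s - h s) * (g s - h s)).
  { intros s. change ((g s - h s) * (g s - h s) = Rabs (g s - h s) ^ 2). rewrite pow2_abs. ring. }
  pose proof (is_derive_mult _ _ t _ _ (is_derive_minus _ _ t _ _ Hg Hh)
                (is_derive_minus _ _ t _ _ Hg Hh) Rmult_comm) as H.
  replace (2 * (g t - h t) * (g' - h')) with
    (plus (mult (minus g' h') (minus (g t) (h t))) (mult (minus (g t) (h t)) (minus g' h'))).
  - exact H.
  - change ((g' - h') * (g t - h t) + (g t - h t) * (g' - h') = 2 * (g t - h t) * (g' - h')). ring.
Qed.

Ltac pidx_tac :=
  unfold pidx; repeat match goal with
  | |- context [Nat.eqb ?a ?b] => let E := fresh in destruct (Nat.eqb a b) eqn:E;
      [apply Nat.eqb_eq in E | apply Nat.eqb_neq in E] end; lia.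

Lemma pidx_in n k : (1 <= k <= n)%nat -> pidx n k = k.
Proof. intros; pidx_tac. Qed.
Lemma P_range n i : (1 <= i <= n)%nat -> (1 <= pidx n (i - 1) <= n)%nat.
Proof. intros; pidx_tac. Qed.
Lemma S_range n i : (1 <= i <= n)%nat -> (1 <= pidx n (i + 1) <= n)%nat.
Proof. intros; pidx_tac. Qed.
Lemma pidx0 n : pidx n 0 = n.
Proof. reflexivity. Qed.
Lemma pidxS n : (1 <= n)%nat -> pidx n (S n) = 1%nat.
Proof. intros; pidx_tac. Qed.
Lemma pidx_PS n i : (2 <= n)%nat -> (1 <= i <= n)%nat -> pidx n (pidx n (i + 1) - 1) = i.
Proof. intros. destruct (Nat.eq_dec i n).
  - subst. replace (n + 1)%nat with (S n) by lia. rewrite pidxS by lia. reflexivity.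
  - rewrite (pidx_in n (i+1)) by lia. replace (i + 1 - 1)%nat with i by lia. apply pidx_in; lia. Qed.
Lemma pidx_SP n i : (2 <= n)%nat -> (1 <= i <= n)%nat -> pidx n (pidx n (i - 1) + 1) = i.
Proof. intros. destruct (Nat.eq_dec i 1).
  - subst. rewrite pidx0. replace (n + 1)%nat with (S n) by lia. apply pidxS; lia.
  - rewrite (pidx_in n (i-1)) by lia. replace (i - 1 + 1)%nat with i by lia. apply pidx_in; lia. Qed.

Lemma two_point (n : nat) (h : nat -> R) : (3 <= n)%nat ->
  (forall k, (2 <= k <= n - 1)%nat -> h k = 0) ->
  sum_n_m h 1 n = h 1%nat + h n.
Proof.
  intros Hn Hz. destruct n as [|m]; [lia|].
  rewrite sumR_Sm, sumR_first by lia.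
  rewrite (sum_n_m_ext_loc h (fun _ => zero)).
  - rewrite sum_n_m_const_zero. unfold zero; simpl; lra.
  - intros k Hk. apply Hz; lia.
Qed.

Lemma sumR_ext (u v : nat -> R) n m : (forall k, u k = v k) -> sum_n_m u n m = sum_n_m v n m.
Proof. intros; apply sum_n_m_ext; assumption. Qed.
Lemma sumR_ext_loc (u v : nat -> R) n m :
  (forall k, (n <= k <= m)%nat -> u k = v k) -> sum_n_m u n m = sum_n_m v n m.
Proof. intros; apply sum_n_m_ext_loc; assumption. Qed.

Theorem mainTheorem4 (n : nat) (a b c delta p lam beta gam : R)
  (f : R -> R) (x y : nat -> R -> R) :
  (4 <= n)%nat ->
  0 < a -> 0 < b -> 0 < c -> 0 < delta -> 0 < p ->
  fhn_nonlinearity f lam beta gam ->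
  fhn_cnn_solution n a b c delta p f x y ->
  forall t, 0 < t ->
    Derive (energy n x y) t + 2 * delta * energy n x y t
      + 4 * p * (x n t - x 1%nat t) ^ 2
    <= 2 * sum_n_m (fun i =>
             (delta + gam) * Rabs (Vd n x i t) ^ 2
             + Rabs (c - b) * (Rabs (Vd n x i t) ^ 2 + Rabs (Vd n y i t) ^ 2))
           1 n
       + 2 * p * (x (n - 1)%nat t - x 2%nat t) ^ 2.
Proof.
  intros Hn Ha Hb Hc Hd Hp Hf Hsol t Ht.
  destruct Hf as (_ & _ & _ & Hfd & _ & _ & Hfg).
  set (P i := pidx n (i - 1)). set (Sx i := pidx n (i + 1)).
  set (X i := x i t). set (Y i := y i t).
  set (V i := X i - X (P i)). set (W i := Y i - Y (P i)).
  set (U i := ufb n x i t).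
  set (G i := a * (X (P i) - 2 * X i + X (Sx i)) + p * U i).
  set (X' i := G i + f (X i) - b * Y i).
  set (Y' i := c * X i - delta * Y i).
  assert (HdX : forall i, (1 <= i <= n)%nat -> is_derive (x i) t (X' i)).
  { intros i Hi. destruct (Hsol i t Hi Ht) as [H1 _].
    unfold X', G. replace (a * (X (P i) - 2 * X i + X (Sx i)) + p * U i + f (X i) - b * Y i)
      with (a * (per n x (i - 1) t - 2 * x i t + per n x (i + 1) t) + f (x i t) - b * y i t +
          p * ufb n x i t) by (unfold per, X, Y, U, P, Sx; ring). exact H1. }
  assert (HdY : forall i, (1 <= i <= n)%nat -> is_derive (y i) t (Y' i)).
  { intros i Hi. destruct (Hsol i t Hi Ht) as [_ H1]. exact H1. }
  assert (HDer : Derive (energy n x y) t =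
     sum_n_m (fun i => 2 * V i * (X' i - X' (P i)) + 2 * W i * (Y' i - Y' (P i))) 1 n).
  { apply is_derive_unique. unfold energy.
    apply (sum_derive (fun i s => Rabs (Vd n x i s) ^ 2 + Rabs (Vd n y i s) ^ 2)).
    intros i Hi. pose proof (P_range n i Hi) as HP.
    refine (is_derive_plus _ _ _ _ _ (deriv_sq _ _ t _ _ (HdX i Hi) (HdX (P i) HP))
              (deriv_sq _ _ t _ _ (HdY i Hi) (HdY (P i) HP))). }
  rewrite HDer. clear HDer.
  unfold energy.
  rewrite (sumR_ext (fun i => Rabs (Vd n x i t) ^ 2 + Rabs (Vd n y i t) ^ 2)
             (fun i => V i ^ 2 + W i ^ 2))
    by (intros i; rewrite !pow2_abs; reflexivity).
  rewrite (sumR_ext (fun i => (delta + gam) * Rabs (Vd n x i t) ^ 2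
             + Rabs (c - b) * (Rabs (Vd n x i t) ^ 2 + Rabs (Vd n y i t) ^ 2))
             (fun i => (delta + gam) * V i ^ 2 + Rabs (c - b) * (V i ^ 2 + W i ^ 2)))
    by (intros i; rewrite !pow2_abs; reflexivity).
  assert (Hn2 : (2 <= n)%nat) by lia.
  set (T1 i := 2 * V i * (G i - G (P i))).
  set (T2 i := 2 * V i * (f (X i) - f (X (P i))) - 2 * b * V i * W i
               + 2 * W i * (c * V i - delta * W i)).
  rewrite (sumR_ext (fun i => 2 * V i * (X' i - X' (P i)) + 2 * W i * (Y' i - Y' (P i)))
             (fun i => T1 i + T2 i))
    by (intros i; unfold T1, T2, X', Y', V, W; ring).
  rewrite sumR_plus.
  assert (HT1 : sum_n_m T1 1 n = sum_n_m (fun i => 2 * (V i - V (Sx i)) * G i) 1 n).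
  { rewrite (sumR_ext T1 (fun i => 2 * V i * G i + (-2) * V i * G (P i)))
      by (intros i; unfold T1; ring).
    rewrite sumR_plus.
    rewrite (sumR_ext_loc (fun i => (-2) * V i * G (P i))
               (fun i => (fun j => (-2) * V (Sx j) * G j) (pidx n (i - 1)))).
    2:{ intros k Hk. unfold Sx, P. rewrite (pidx_SP n k) by lia. reflexivity. }
    rewrite (sum_shift n (fun j => (-2) * V (Sx j) * G j)) by lia. rewrite <- sumR_plus.
    apply sumR_ext; intros i; ring. }
  assert (HT1b : sum_n_m (fun i => 2 * (V i - V (Sx i)) * G i) 1 n
                 <= sum_n_m (fun i => 2 * p * (V i - V (Sx i)) * U i) 1 n).
  { apply sumR_le_loc. intros k Hk.
    assert (E : V (Sx k) = X (Sx k) - X k).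
    { unfold V. f_equal. unfold X, Sx, P. rewrite (pidx_PS n k) by lia. reflexivity. }
    assert (EG : G k = a * (V (Sx k) - V k) + p * U k).
    { unfold G. rewrite E. unfold V. ring. }
    rewrite EG. assert (0 <= a * (V (Sx k) - V k) ^ 2) by (apply Rmult_le_pos; [lra|apply pow2_ge_0]).
    nra. }
  rewrite <- HT1 in HT1b.
  rewrite (two_point n (fun i => 2 * p * (V i - V (Sx i)) * U i)) in HT1b.
  2: lia.
  2:{ intros k Hk. unfold U, ufb.
      destruct (Nat.eqb k 1) eqn:E1; [apply Nat.eqb_eq in E1; lia|].
      destruct (Nat.eqb k n) eqn:E2; [apply Nat.eqb_eq in E2; lia|]. ring. }
  assert (HS1 : Sx 1%nat = 2%nat) by (unfold Sx; apply pidx_in; lia).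
  assert (HSn : Sx n = 1%nat) by (unfold Sx; replace (n + 1)%nat with (Datatypes.S n) by lia; apply pidxS; lia).
  assert (HP1 : P 1%nat = n) by reflexivity.
  assert (HP2 : P 2%nat = 1%nat) by (unfold P; apply pidx_in; lia).
  assert (HPn : P n = (n - 1)%nat) by (unfold P; apply pidx_in; lia).
  assert (HU1 : U 1%nat = X n - X 1%nat) by reflexivity.
  assert (HUn : U n = X 1%nat - X n).
  { unfold U, ufb. destruct (Nat.eqb n 1) eqn:E1; [apply Nat.eqb_eq in E1; lia|].
    rewrite Nat.eqb_refl. reflexivity. }
  rewrite HS1, HSn, HU1, HUn in HT1b.
  unfold V in HT1b. rewrite HP1, HP2, HPn in HT1b.
  assert (HT2 : sum_n_m T2 1 n + 2 * delta * sum_n_m (fun i => V i ^ 2 + W i ^ 2) 1 n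
     <= 2 * sum_n_m (fun i => (delta + gam) * V i ^ 2 + Rabs (c - b) * (V i ^ 2 + W i ^ 2)) 1 n).
  { rewrite <- !sumR_scal, <- sumR_plus. apply sum_n_m_le. intros k.
    pose proof (mvt_mono f gam (X k) (X (P k)) Hfd Hfg) as Hm.
    fold (V k) in Hm. unfold T2.
    assert (0 <= V k ^ 2) by apply pow2_ge_0. assert (0 <= W k ^ 2) by apply pow2_ge_0.
    assert (0 <= (V k - W k) ^ 2) by apply pow2_ge_0. assert (0 <= (V k + W k) ^ 2) by apply pow2_ge_0.

    unfold Rabs; destruct (Rcase_abs (c - b)); simpl in *; nra. }
  set (d := x 1%nat t - x n t). set (e := x 2%nat t - x (n - 1)%nat t).
  assert (0 <= p * (d - e) ^ 2) by (apply Rmult_le_pos; [lra | apply pow2_ge_0]).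
  assert (0 <= p * d ^ 2) by (apply Rmult_le_pos; [lra | apply pow2_ge_0]).
  assert (0 <= p * e ^ 2) by (apply Rmult_le_pos; [lra | apply pow2_ge_0]).
  unfold X in HT1b. fold d e in HT1b.
  replace ((x n t - x 1%nat t) ^ 2) with (d ^ 2) by (unfold d; ring).
  replace ((x (n - 1)%nat t - x 2%nat t) ^ 2) with (e ^ 2) by (unfold e; ring).
  assert (HT1c : sum_n_m T1 1 n <= 2*p*d*e - 6*p*d^2)
    by (eapply Rle_trans; [exact HT1b | unfold d, e; right; ring]).
  nra.
Qed.
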